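(* Let $F=P_{\ell_1}\cup\cdots\cup P_{\ell_k}$ be a linear forest with $\ell_1\ge\cdots\ge\ell_k\ge2$, $\ell_i\neq3$ for all $i$, and $F$ not of the form $kP_5$. Let $G$ be a graph containing disjoint vertex sets $X,Y$ with $|X|=\delta_F$ and $|Y|\ge |F|-\delta_F$ such that every vertex of $X$ is adjacent to every vertex of $Y$. Then $G$ contains $F$ as a subgraph provided one of the following holds: (a) some $\ell_i$ is even and $G-(X\cup Y)$ contains an edge $v_1v_2$ such that $v_1$ is adjacent to some vertex $x_1\in X$; (b) every $\ell_i$ is odd and $G-(X\cup Y)$ contains a path $v_1v_2v_3$ such that $v_1$ is adjacent to some vertex $x_1\in X$; (c) every $\ell_i$ is odd and $G-(X\cup Y)$ contains two vertex-disjoint edges $v_1v_2$, $v_3v_4$ such that $v_1x_1$ and $v_3x_2$ are edges of $G$ for some distinct $x_1,x_2\in X$.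
   Context: $P_m$ is the path on $m$ vertices; $kP_5$ denotes $k$ disjoint copies of $P_5$. $|F|=\sum\ell_i$ and $\delta_F=\sum_{i=1}^k\lfloor \ell_i/2\rfloor-1$. For $S\subseteq V(G)$, $G-S$ is the graph obtained by deleting the vertices of $S$. *)

(* Defs.v *)
From mathcomp Require Import all_boot.
Set Implicit Arguments. Unset Strict Implicit. Unset Printing Implicit Defensive.

(* A (finite simple) graph is a symmetric irreflexive relation [e : rel T]
   on a finite vertex type [T].  A linear forest F = P_{l_1} u ... u P_{l_k}
   is encoded by the list [ls = [:: l_1; ...; l_k]] of its path orders. *)

Definition forest_order (ls : seq nat) : nat := sumn ls.

Definition delta_F (ls : seq nat) : nat := sumn [seq l./2 | l <- ls] - 1.

(* G contains F as a subgraph: an injective map from V(F) = {(i,j) | i < k, j < l_i}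
   to V(G) sending every path edge (i,j)(i,j+1) to an edge of G. *)
Definition contains_linear_forest (T : finType) (e : rel T) (ls : seq nat) : Prop :=
  exists f : nat -> nat -> T,
    (forall i j i' j', i < size ls -> j < nth 0 ls i ->
       i' < size ls -> j' < nth 0 ls i' -> f i j = f i' j' -> i = i' /\ j = j')
    /\ (forall i j, i < size ls -> j.+1 < nth 0 ls i -> e (f i j) (f i j.+1)).

(* Main.v *)
Require Import Defs.
From mathcomp Require Import all_boot.
From mathcomp Require Import zify.

Module Helpers.
Set Implicit Arguments. Unset Strict Implicit. Unset Printing Implicit Defensive.

Section Alt.
Variable T : eqType.

Fixpoint alt (xs ys : seq T) {struct xs} : seq T :=
  match xs, ys with
  | x :: xs', y :: ys' => x :: y :: alt xs' ys'
  | x :: _, [::] => [:: x]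
  | [::], _ => [::]
  end.

Lemma alt_size xs ys : size (alt xs ys) =
  if size xs <= size ys then (size xs).*2 else (size ys).*2.+1.
Proof.
elim: xs ys => [|x xs IH] [|y ys] //=. rewrite IH /=.
rewrite ltnS; case: ifP => _ //=; by rewrite doubleS.
Qed.
Lemma dummy_x : True. Proof. by [].
Qed.

Lemma alt_mem xs ys v : v \in alt xs ys -> (v \in xs) || (v \in ys).
Proof.
elim: xs ys => [|x xs IH] [|y ys] //=.
- by rewrite !inE => ->.
- rewrite !inE => /orP[->//|/orP[->|/IH/orP[]->]]; rewrite ?orbT //.
Qed.

Lemma alt_uniq xs ys : uniq (xs ++ ys) -> uniq (alt xs ys).
Proof.
elim: xs ys => [|x xs IH] [|y ys] //=.
move=> H.
have : uniq (x :: y :: (xs ++ ys)).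
  have P : perm_eq (x :: xs ++ y :: ys) (x :: y :: xs ++ ys).
    by rewrite perm_cons -[y :: ys]cat1s perm_catCA.
  by rewrite -(perm_uniq P).
rewrite /= !inE negb_or => /andP[/andP[Hxy Hx] /andP[Hy Hu]].
rewrite negb_or Hxy IH // andbT.
apply/andP; split; apply/negP => /alt_mem Hm.
- by move: Hx; rewrite mem_cat Hm.
- by move: Hy; rewrite mem_cat Hm.
Qed.

Lemma alt_last xs ys z : size xs = size ys -> last z (alt xs ys) = last z ys.
Proof.
elim: xs ys z => [|x xs IH] [|y ys] z //= [] H. by rewrite IH.
Qed.

Variable e : rel T.

Lemma alt_path (A B : pred T) xs ys z :
  (forall a b, a \in A -> b \in B -> e a b /\ e b a) ->
  all (mem A) xs -> all (mem B) ys -> (forall a, a \in A -> e z a) ->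
  path e z (alt xs ys).
Proof.
move=> HAB. elim: xs ys z => [|x xs IH] [|y ys] z //=.
- by move=> /andP[Hx _] _ Hz; rewrite Hz.
- move=> /andP[Hx Hxs] /andP[Hy Hys] Hz.
  rewrite Hz // (HAB _ _ Hx Hy).1 /=.
  apply: IH => // a Ha. exact: (HAB _ _ Ha Hy).2.
Qed.

Lemma alt_sorted (A B : pred T) xs ys :
  (forall a b, a \in A -> b \in B -> e a b /\ e b a) ->
  all (mem A) xs -> all (mem B) ys -> sorted e (alt xs ys).
Proof.
move=> HAB. case: xs ys => [|x xs] [|y ys] //= /andP[Hx Hxs] /andP[Hy Hys].
rewrite (HAB _ _ Hx Hy).1 /=.
apply: (alt_path HAB) => //. move=> a Ha. exact: (HAB _ _ Ha Hy).2.
Qed.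

Hypothesis esym : symmetric e.

Fixpoint build (xs ys : seq T) (ls : seq nat) : seq (seq T) :=
  match ls with
  | [::] => [::]
  | l :: ls' => alt (take (uphalf l) ys) (take l./2 xs) :: build (drop l./2 xs) (drop (uphalf l) ys) ls'
  end.

Lemma take_drop_disj (s : seq T) n x : uniq s -> x \in take n s -> x \in drop n s -> False.
Proof.
rewrite -{1}(cat_take_drop n s) cat_uniq => /and3P[_ /hasPn H _] Ht Hd.
by move: (H _ Hd); rewrite Ht.
Qed.

Lemma build_spec xs ys ls :
  uniq xs -> uniq ys -> (forall x, x \in xs -> x \notin ys) ->
  (forall x y, x \in xs -> y \in ys -> e x y) ->
  sumn (map half ls) <= size xs -> sumn (map uphalf ls) <= size ys ->
  [/\ map size (build xs ys ls) = ls, uniq (flatten (build xs ys ls)),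
      {subset flatten (build xs ys ls) <= xs ++ ys} & all (sorted e) (build xs ys ls)].
Proof.
elim: ls xs ys => [|l ls IH] xs ys Hx Hy Hxy Hc //= Hsx Hsy.
have Hs1 : sumn (map half ls) <= size (drop l./2 xs).
  rewrite size_drop; lia.
have Hs2 : sumn (map uphalf ls) <= size (drop (uphalf l) ys).
  rewrite size_drop; lia.
have [Hm Hu Hsub Hs] := IH (drop l./2 xs) (drop (uphalf l) ys) (drop_uniq _ Hx) (drop_uniq _ Hy)
   (fun x Hx1 => contra (@mem_drop _ _ _ _) (Hxy _ (mem_drop Hx1)))
   (fun x y H1 H2 => Hc _ _ (mem_drop H1) (mem_drop H2)) Hs1 Hs2.
have Halt : forall v, v \in alt (take (uphalf l) ys) (take l./2 xs) -> (v \in take (uphalf l) ys) || (v \in take l./2 xs).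
  by move=> v; apply: alt_mem.
split.
- rewrite Hm alt_size !size_takel; try lia.
  congr (_ :: _); rewrite uphalf_half; have := odd_double_half l; case: (odd l) => /= H; case: leqP => Hif; lia.
- rewrite cat_uniq Hu andbT; apply/andP; split.
  + apply: alt_uniq; rewrite cat_uniq !take_uniq //=; rewrite andbT; apply/hasPn => v /mem_take Hv.
    apply/negP => /mem_take Hv2. by move: (Hxy _ Hv); rewrite Hv2.
  + apply/hasPn => v /Hsub; rewrite mem_cat => Hv; apply/negP => /Halt /orP[] Hv2.
    * case/orP: Hv => Hv.
      - by move: (Hxy _ (mem_drop Hv)); rewrite (mem_take Hv2).
      - exact: (take_drop_disj Hy Hv2 Hv).
    * case/orP: Hv => Hv.
      - exact: (take_drop_disj Hx Hv2 Hv).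
      - by move: (Hxy _ (mem_take Hv2)); rewrite (mem_drop Hv).
- move=> v; rewrite mem_cat => /orP[/Halt /orP[]|/Hsub]; rewrite !mem_cat.
  + by move/mem_take => ->; rewrite orbT.
  + by move/mem_take => ->.
  + by case/orP => /mem_drop ->; rewrite ?orbT.
- rewrite Hs andbT.
  apply: (alt_sorted (A := [pred v | v \in ys]) (B := [pred v | v \in xs])).
  + move=> a b Ha Hb; split; [rewrite esym|]; exact: Hc.
  + by apply/allP => v /mem_take.
  + by apply/allP => v /mem_take.
Qed.

End Alt.

Lemma alt_last_mem (T : eqType) (xs ys : seq T) z :
  size xs = (size ys).+1 -> last z (alt xs ys) \in xs.
Proof.
elim: xs ys z => [|x xs IH] [|y ys] z //=.
- by move=> _; rewrite inE eqxx.
- case=> H. rewrite inE; apply/orP; right. exact: IH.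
Qed.

Lemma sum_rm (f : nat -> nat) ls i0 : i0 < size ls ->
  sumn (map f ls) = sumn (map f (take i0 ls ++ drop i0.+1 ls)) + f (nth 0 ls i0).
Proof.
move=> Hi. rewrite -{1}(cat_take_drop i0 ls) (drop_nth 0 Hi) !map_cat !sumn_cat /=. lia.
Qed.

Lemma sum_split ls : sumn ls = sumn (map half ls) + sumn (map uphalf ls).
Proof.
elim: ls => //= l ls ->. rewrite uphalf_half. have := odd_double_half l. lia.
Qed.


Section Forest.
Variable T : finType.
Variable e : rel T.
Hypothesis esym : symmetric e.
Variable x0 : T.

Lemma nth_flatten_mem (ps : seq (seq T)) i j :
  i < size ps -> j < size (nth [::] ps i) -> nth x0 (nth [::] ps i) j \in flatten ps.
Proof.
move=> Hi Hj; apply/flattenP; exists (nth [::] ps i); first exact: mem_nth.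
exact: mem_nth.
Qed.

Lemma paths_inj (ps : seq (seq T)) : uniq (flatten ps) ->
  forall i j i' j', i < size ps -> j < size (nth [::] ps i) ->
   i' < size ps -> j' < size (nth [::] ps i') ->
   nth x0 (nth [::] ps i) j = nth x0 (nth [::] ps i') j' -> i = i' /\ j = j'.
Proof.
elim: ps => [|p ps IH] //= Hu [|i] j [|i'] j' //=; move: Hu; rewrite cat_uniq => /and3P[Hp Hd Hr].
- move=> _ Hj _ Hj' E; split=> //. by apply/eqP; rewrite -(nth_uniq x0 Hj Hj' Hp) E.
- move=> _ Hj Hi' Hj' E; exfalso; move/hasPn: Hd; move/(_ _ (nth_flatten_mem Hi' Hj')).
  by rewrite -E mem_nth.
- move=> Hi Hj _ Hj' E; exfalso; move/hasPn: Hd; move/(_ _ (nth_flatten_mem Hi Hj)).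
  by rewrite E mem_nth.
- move=> Hi Hj Hi' Hj' E. by case: (IH Hr i j i' j' Hi Hj Hi' Hj' E) => -> ->.
Qed.

Lemma paths_forest (ps : seq (seq T)) : uniq (flatten ps) -> all (sorted e) ps ->
  contains_linear_forest e (map size ps).
Proof.
move=> Hu Hs; exists (fun i j => nth x0 (nth [::] ps i) j); split.
- move=> i j i' j'; rewrite size_map => Hi; rewrite (nth_map [::]) // => Hj Hi'.
  rewrite (nth_map [::]) // => Hj'. exact: paths_inj.
- move=> i j; rewrite size_map => Hi; rewrite (nth_map [::]) // => Hj.
  have : sorted e (nth [::] ps i) by apply: (allP Hs); exact: mem_nth.
  by move/(sortedP x0); apply.
Qed.

Lemma assemble ls i0 sp xr yr :
  i0 < size ls -> uniq xr -> uniq yr -> (forall x, x \in xr -> x \notin yr) ->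
  (forall x y, x \in xr -> y \in yr -> e x y) ->
  sumn (map half (take i0 ls ++ drop i0.+1 ls)) <= size xr ->
  sumn (map uphalf (take i0 ls ++ drop i0.+1 ls)) <= size yr ->
  uniq sp -> sorted e sp -> size sp = nth 0 ls i0 ->
  (forall v, v \in sp -> v \notin xr ++ yr) ->
  contains_linear_forest e ls.
Proof.
move=> Hi0 Hx Hy Hxy Hc Hs1 Hs2 Hsp Hsps Hsz Hdisj.
have [Hm Hu Hsub Hs] := build_spec esym Hx Hy Hxy Hc Hs1 Hs2.
set ps0 := build xr yr _ in Hm Hu Hsub Hs.
have Hsz0 : size (take i0 ls) = i0 by rewrite size_takel // ltnW.
have E : ls = map size (take i0 ps0 ++ sp :: drop i0 ps0).
  rewrite map_cat /= map_take map_drop Hm Hsz take_size_cat // drop_size_cat //.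
  by rewrite -(drop_nth 0 Hi0) cat_take_drop.
rewrite {1}E; apply: paths_forest.
- rewrite flatten_cat /=.
  have P : perm_eq (flatten (take i0 ps0) ++ sp ++ flatten (drop i0 ps0))
                   (sp ++ flatten (take i0 ps0) ++ flatten (drop i0 ps0)) by rewrite perm_catCA.
  rewrite (perm_uniq P) -flatten_cat cat_take_drop cat_uniq Hu Hsp andbT /=.
  apply/hasPn => v Hv; apply/negP => Hv2; move: (Hdisj v Hv2). by rewrite (Hsub v Hv).
- apply/allP => p; rewrite mem_cat inE => /orP[/mem_take Hp|/orP[/eqP ->//|/mem_drop Hp]];
  exact: (allP Hs).
Qed.

End Forest.


Section Special.
Variable T : finType.
Variable e : rel T.
Hypothesis esym : symmetric e.
Variable x0 : T.

Lemma special ls i0 (X Y : {set T}) xs0 ys0 kx ky pre suf :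
  i0 < size ls -> [disjoint X & Y] -> (forall x y, x \in X -> y \in Y -> e x y) ->
  uniq xs0 -> {subset xs0 <= X} -> uniq ys0 -> {subset ys0 <= Y} ->
  sumn (map half (take i0 ls ++ drop i0.+1 ls)) <= size xs0 - kx ->
  sumn (map uphalf (take i0 ls ++ drop i0.+1 ls)) <= size ys0 - ky ->
  uniq (pre ++ suf) ->
  (forall w, w \in pre ++ suf -> ((w \notin X) && (w \notin Y)) || ((w \in X) && (w \notin xs0))) ->
  sorted e (pre ++ alt (take ky ys0) (take kx xs0) ++ suf) ->
  size (pre ++ alt (take ky ys0) (take kx xs0) ++ suf) = nth 0 ls i0 ->
  contains_linear_forest e ls.
Proof.
move=> Hi0 Hd Hc Hx HxX Hy HyY Hs1 Hs2 Hps Hw Hsort Hsz.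
have Xn : forall w, w \in X -> w \notin Y by move=> w Hw1; rewrite (disjointFr Hd Hw1).
set A := alt _ _ in Hsort Hsz.
have HA : forall w, w \in A -> (w \in take ky ys0) || (w \in take kx xs0) by move=> w; apply: alt_mem.
apply: (@assemble _ _ esym x0 ls i0 (pre ++ A ++ suf) (drop kx xs0) (drop ky ys0) Hi0 (drop_uniq _ Hx) (drop_uniq _ Hy)) => //.
- move=> x /mem_drop /HxX /Xn. by apply: contra => /mem_drop /HyY.
- move=> x y /mem_drop /HxX H1 /mem_drop /HyY H2. exact: Hc.
- by rewrite size_drop.
- by rewrite size_drop.
- have P : perm_eq (pre ++ A ++ suf) (A ++ pre ++ suf) by rewrite perm_catCA.
  rewrite (perm_uniq P) cat_uniq Hps andbT; apply/andP; split.
  + apply: alt_uniq; rewrite cat_uniq !take_uniq //= andbT; apply/hasPn => w /mem_take /HxX /Xn.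
    by apply: contra => /mem_take /HyY.
  + apply/hasPn => w /Hw /orP[/andP[H1 H2]|/andP[H1 H2]]; apply/negP => /HA /orP[] /mem_take H3.
    * by move: H2; rewrite (HyY _ H3).
    * by move: H1; rewrite (HxX _ H3).
    * by move: (Xn _ H1); rewrite (HyY _ H3).
    * by move: H2; rewrite H3.
- move=> w; rewrite !mem_cat => Hw1; rewrite negb_or.
  have : (w \in pre ++ suf) || (w \in A) by move: Hw1; rewrite !mem_cat; case/or3P => ->; rewrite ?orbT.
  case/orP => [/Hw /orP[/andP[H1 H2]|/andP[H1 H2]]|/HA /orP[] H3].
  + apply/andP; split; apply/negP => /mem_drop H3.
    * by move: H1; rewrite (HxX _ H3).
    * by move: H2; rewrite (HyY _ H3).
  + apply/andP; split; apply/negP => /mem_drop H3.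
    * by move: H2; rewrite H3.
    * by move: (Xn _ H1); rewrite (HyY _ H3).
  + apply/andP; split; apply/negP => H4.
    * by move: (Xn _ (HxX _ (mem_drop H4))); rewrite (HyY _ (mem_take H3)).
    * exact: (take_drop_disj Hy H3 H4).
  + apply/andP; split; apply/negP => H4.
    * exact: (take_drop_disj Hx H3 H4).
    * by move: (Xn _ (HxX _ (mem_take H3))); rewrite (HyY _ (mem_drop H4)).
Qed.

End Special.

End Helpers.
Import Helpers.

Theorem mainTheorem6 (T : finType) (e : rel T) (ls : seq nat) (X Y : {set T}) :
  symmetric e -> irreflexive e ->
  sorted geq ls ->
  all (fun l => 2 <= l) ls ->
  all (fun l => l != 3) ls ->
  ~~ all (fun l => l == 5) ls ->
  [disjoint X & Y] ->
  #|X| = delta_F ls ->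
  forest_order ls - delta_F ls <= #|Y| ->
  (forall x y, x \in X -> y \in Y -> e x y) ->
  ( (has (fun l => ~~ odd l) ls /\
      exists v1 v2 x1, [/\ v1 \notin X :|: Y, v2 \notin X :|: Y, e v1 v2,
                           x1 \in X & e v1 x1])
    \/ (all odd ls /\
      exists v1 v2 v3 x1, [/\ all (fun v => v \notin X :|: Y) [:: v1; v2; v3],
                              v1 != v3, e v1 v2, e v2 v3 & (x1 \in X /\ e v1 x1)])
    \/ (all odd ls /\
      exists v1 v2 v3 v4 x1 x2,
        [/\ uniq [:: v1; v2; v3; v4], all (fun v => v \notin X :|: Y) [:: v1; v2; v3; v4],
            e v1 v2, e v3 v4 &
            [/\ x1 \in X, x2 \in X, x1 != x2, e v1 x1 & e v3 x2]]) ) ->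
  contains_linear_forest e ls.
Proof.
move=> Hsym Hirr Hsort H2 H3 H5 Hd HX HY Hc Hcase.
have Hne : ls != [::] by case: ls H5 {Hsort H2 H3 HX HY Hcase}.
have HX' : #|X| = sumn (map half ls) - 1 by rewrite HX.
have Hpos : 1 <= sumn (map half ls).
  case: ls Hne H2 {Hsort H3 H5 HX HY Hcase HX'} => // l ls _ /= /andP[Hl _]. lia.
have HY' : sumn (map uphalf ls) + 1 <= #|Y|.
  move: HY; rewrite /forest_order sum_split -/(delta_F ls) -HX HX'. lia.
have Xn : forall w, w \in X -> w \notin Y by move=> w Hw1; rewrite (disjointFr Hd Hw1).
have Hc' : forall a b, a \in [pred y | y \in Y] -> b \in [pred x | x \in X] -> e a b /\ e b a.
  by move=> a b /= Ha Hb; rewrite Hsym; split; apply: Hc.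
have outs : forall v, v \notin X :|: Y -> (v \notin X) && (v \notin Y).
  by move=> v; rewrite in_setU negb_or.
have neq_e : forall a b, e a b -> a != b.
  by move=> a b; apply: contraTneq => ->; rewrite Hirr.
case: Hcase => [[Hev [v1 [v2 [x1 [Hv1 Hv2 He12 Hx1 He1x]]]]]|Hbc].
-
  move/hasP: Hev => [l Hl Hl2]; move/(nthP 0): Hl => [i0 Hi0 Hnth].
  have HL2 : 2 <= nth 0 ls i0 by move/allP: H2; apply; exact: mem_nth.
  have Hsr := sum_rm half Hi0; have Usr := sum_rm uphalf Hi0.
  move: Hl2; rewrite -Hnth => Hev.
  have HL := odd_double_half (nth 0 ls i0); have UL := uphalf_half (nth 0 ls i0).
  rewrite (negbTE Hev) /= in HL UL.
  move: (outs _ Hv1) (outs _ Hv2) => /andP[Hv1X Hv1Y] /andP[Hv2X Hv2Y].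
  have Hrx : v1 != x1 by apply: contraNneq Hv1X => ->.
  have Hr2x : v2 != x1 by apply: contraNneq Hv2X => ->.
  case: (ltnP (nth 0 ls i0) 4) => HL4.
  + apply: (@special _ _ Hsym v1 ls i0 X Y (enum X) (enum Y) 0 0 [:: v2; v1] [::]) => //.
    * exact: enum_uniq.
    * by move=> x; rewrite mem_enum.
    * exact: enum_uniq.
    * by move=> x; rewrite mem_enum.
    * rewrite -cardE; clear -Hsr HX' HL HL4 HL2; lia.
    * rewrite -cardE; clear -Usr HY' HL UL HL4 HL2; lia.
    * by rewrite /= inE eq_sym neq_e.
    * by move=> w; rewrite /= !inE => /orP[]/eqP->; rewrite ?Hv1X ?Hv1Y ?Hv2X ?Hv2Y.
    * by rewrite !take0 /= Hsym He12.
    * by rewrite !take0 /= -HL; clear -HL4 HL2 HL; lia.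
  + have hXD : #|X :\ x1| = #|X| - 1 by have := cardsD1 x1 X; rewrite Hx1; clear; lia.
    set L := nth 0 ls i0 in Hsr Usr HL UL HL4 HL2 *.
    have HkX : L./2 - 2 <= size (enum (X :\ x1)) by rewrite -cardE hXD; clear -HX' Hsr; lia.
    have HkY : L./2 - 1 <= size (enum Y) by rewrite -cardE; clear -HY' Usr UL; lia.
    apply: (@special _ _ Hsym v1 ls i0 X Y (enum (X :\ x1)) (enum Y) (L./2 - 2) (L./2 - 1) [:: v2; v1; x1] [::]) => //.
    * exact: enum_uniq.
    * by move=> x; rewrite mem_enum in_setD1 => /andP[_ ->].
    * exact: enum_uniq.
    * by move=> x; rewrite mem_enum.
    * rewrite -cardE hXD; clear -Hsr HX' HL HL4 HL2; lia.
    * rewrite -cardE; clear -Usr HY' HL UL HL4 HL2; lia.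
    * by rewrite /= !inE !negb_or eq_sym neq_e //= Hrx Hr2x.
    * move=> w; rewrite /= !inE => /or3P[]/eqP->; rewrite ?Hv1X ?Hv1Y ?Hv2X ?Hv2Y //.
      by rewrite Hx1 mem_enum in_setD1 eqxx.
    * rewrite cats0 /= Hsym He12 He1x /=.
      apply: (alt_path Hc').
      - by apply/allP => y /mem_take; rewrite mem_enum.
      - by apply/allP => y /mem_take; rewrite mem_enum in_setD1 => /andP[_].
      - by move=> a Ha; apply: Hc.
    * rewrite /= cats0 alt_size !size_takel //; case: leqP => Hle; clear -Hle HL HL4 HL2; lia.
have Hi0 : 0 < size ls by case: ls Hne {Hsort H2 H3 H5 HX HY Hbc HX' Hpos HY'}.
have Hsr := sum_rm half Hi0; have Usr := sum_rm uphalf Hi0.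
have HL2 : 2 <= nth 0 ls 0 by move/allP: H2; apply; exact: mem_nth.
have HL3 : nth 0 ls 0 != 3 by move/allP: H3; apply; exact: mem_nth.
set L := nth 0 ls 0 in Hsr Usr HL2 HL3 *.
have neqX : forall a b, a \in X -> b \notin X -> (a == b) = false /\ (b == a) = false.
  move=> a b Ha Hb; have Hab : a != b by apply: contraNneq Hb => <-.
  by rewrite (negbTE Hab) eq_sym (negbTE Hab).
case: Hbc => [[Hodd [v1 [v2 [v3 [x1 [Hall Hv13 He12 He23 [Hx1 He1x]]]]]]]|
              [Hodd [v1 [v2 [v3 [v4 [x1 [x2 [Hu Hall He12 He34 [Hx1 Hx2 Hx12 He1x He3x]]]]]]]]]].
-
  have HoL : odd L by move/allP: Hodd; apply; exact: mem_nth.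
  have HL := odd_double_half L; have UL := uphalf_half L.
  rewrite HoL /= in HL UL.
  move: Hall => /= /and4P[/outs/andP[Hv1X Hv1Y] /outs/andP[Hv2X Hv2Y] /outs/andP[Hv3X Hv3Y] _].
  have HL5 : 5 <= L by move/eqP: HL3; clear -HL HL2; lia.
  have hXD : #|X :\ x1| = #|X| - 1 by have := cardsD1 x1 X; rewrite Hx1; clear; lia.
  have HkX : L./2 - 2 <= size (enum (X :\ x1)) by rewrite -cardE hXD; clear -HX' Hsr; lia.
  have HkY : L./2 - 1 <= size (enum Y) by rewrite -cardE; clear -HY' Usr UL; lia.
  apply: (@special _ _ Hsym v1 ls 0 X Y (enum (X :\ x1)) (enum Y) (L./2 - 2) (L./2 - 1) [:: v3; v2; v1; x1] [::]) => //.
  + exact: enum_uniq.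
  + by move=> x; rewrite mem_enum in_setD1 => /andP[_ ->].
  + exact: enum_uniq.
  + by move=> x; rewrite mem_enum.
  + rewrite -cardE hXD; clear -Hsr HX' HL HL5; lia.
  + rewrite -cardE; clear -Usr HY' HL UL HL5; lia.
  + have [n1 n1'] := neqX _ _ Hx1 Hv1X; have [n2 n2'] := neqX _ _ Hx1 Hv2X.
    have [n3 n3'] := neqX _ _ Hx1 Hv3X.
    have n12 := negbTE (neq_e _ _ He12); have n23 := negbTE (neq_e _ _ He23).
    have n13 := negbTE Hv13.
    by rewrite /= !inE eq_sym n23 eq_sym n13 n3' eq_sym n12 n2' n1'.
  + move=> w; rewrite /= !inE => /or4P[]/eqP->; rewrite ?Hv1X ?Hv1Y ?Hv2X ?Hv2Y ?Hv3X ?Hv3Y //.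
    by rewrite Hx1 mem_enum in_setD1 eqxx.
  + rewrite cats0 /= Hsym He23 Hsym He12 He1x /=.
    apply: (alt_path Hc').
    * by apply/allP => y /mem_take; rewrite mem_enum.
    * by apply/allP => y /mem_take; rewrite mem_enum in_setD1 => /andP[_].
    * by move=> a Ha; apply: Hc.
  + rewrite /= cats0 alt_size !size_takel //; case: leqP => Hle; clear -Hle HL HL5; lia.
-
  have HoL : odd L by move/allP: Hodd; apply; exact: mem_nth.
  have HL := odd_double_half L; have UL := uphalf_half L.
  rewrite HoL /= in HL UL.
  move: Hall => /= /and5P[/outs/andP[Hv1X Hv1Y] /outs/andP[Hv2X Hv2Y] /outs/andP[Hv3X Hv3Y] /outs/andP[Hv4X Hv4Y] _].
  have HL7 : 7 <= L.
    move/allPn: H5 => [l Hl Hl5].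
    have Hol : odd l by move/allP: Hodd; apply.
    have Hl2 : 2 <= l by move/allP: H2; apply.
    have Hl3 : l != 3 by move/allP: H3; apply.
    have Hll : l <= L.
      rewrite /L; case: (ls) Hsort Hl => [//|a s] /= Hs; rewrite inE => /orP[/eqP->//|Hl].
      have Htr : transitive geq by move=> a1 b1 c1 /= H1 H2'; exact: leq_trans H2' H1.
      by move/allP: (order_path_min Htr Hs) => /(_ _ Hl).
    have := odd_double_half l; rewrite Hol /=.
    move/eqP: Hl5; move/eqP: Hl3; clear -Hll Hl2; lia.
  have Hx2' : x2 \in X :\ x1 by rewrite in_setD1 eq_sym Hx12.
  have hXD : #|X :\ x1 :\ x2| = #|X| - 2.
    have := cardsD1 x2 (X :\ x1); have := cardsD1 x1 X; rewrite Hx1 Hx2'; clear; lia.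
  have Hxs : forall x, x \in enum (X :\ x1 :\ x2) -> [/\ x \in X, x != x1 & x != x2].
    by move=> x; rewrite mem_enum !in_setD1 => /and3P[-> -> ->].
  have HkX : L./2 - 3 <= size (enum (X :\ x1 :\ x2)) by rewrite -cardE hXD; clear -HX' Hsr; lia.
  have HkY : L./2 - 2 <= size (enum Y) by rewrite -cardE; clear -HY' Usr UL; lia.
  apply: (@special _ _ Hsym v1 ls 0 X Y (enum (X :\ x1 :\ x2)) (enum Y) (L./2 - 3) (L./2 - 2)
            [:: v2; v1; x1] [:: x2; v3; v4]) => //.
  + exact: enum_uniq.
  + by move=> x /Hxs [].
  + exact: enum_uniq.
  + by move=> x; rewrite mem_enum.
  + rewrite -cardE hXD; clear -Hsr HX' HL HL7; lia.
  + rewrite -cardE; clear -Usr HY' HL UL HL7; lia.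
  + have [n11 n11'] := neqX _ _ Hx1 Hv1X; have [n12 n12'] := neqX _ _ Hx1 Hv2X.
    have [n13 n13'] := neqX _ _ Hx1 Hv3X; have [n14 n14'] := neqX _ _ Hx1 Hv4X.
    have [n21 n21'] := neqX _ _ Hx2 Hv1X; have [n22 n22'] := neqX _ _ Hx2 Hv2X.
    have [n23 n23'] := neqX _ _ Hx2 Hv3X; have [n24 n24'] := neqX _ _ Hx2 Hv4X.
    move: Hu; rewrite /= !inE !negb_or => /andP[/and3P[u12 u13 u14] /andP[/andP[u23 u24] /andP[u34 _]]].
    have u21 : v2 != v1 by rewrite eq_sym.
    rewrite /= ?inE ?negb_or.
    by rewrite ?n11' ?n12' ?n13' ?n14' ?n21' ?n22' ?n23' ?n24' ?n11 ?n12 ?n13 ?n14 ?n21 ?n22 ?n23 ?n24 Hx12 u21 u23 u24 u13 u14 u34.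
  + move=> w; rewrite mem_cat !inE => /orP[/or3P[]|/or3P[]] /eqP->;
      rewrite ?Hv1X ?Hv1Y ?Hv2X ?Hv2Y ?Hv3X ?Hv3Y ?Hv4X ?Hv4Y //.
    * by rewrite Hx1 mem_enum !in_setD1 eqxx andbF.
    * by rewrite Hx2 mem_enum !in_setD1 eqxx.
  + set A := alt _ _.
    have HlA : last x1 A \in take (L./2 - 2) (enum Y).
      apply: alt_last_mem; rewrite !size_takel //; clear -HL7 HL; lia.
    rewrite /= Hsym He12 He1x /= cat_path; apply/andP; split.
    * apply: (alt_path Hc').
      - by apply/allP => y /mem_take; rewrite mem_enum.
      - by apply/allP => y /mem_take /Hxs [].
      - by move=> a Ha; apply: Hc.
    * rewrite /= Hsym Hc //; last by move: HlA => /mem_take; rewrite mem_enum.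
      by rewrite Hsym He3x He34.
  + rewrite /= size_cat alt_size !size_takel //.
    rewrite -/L /=. case: leqP => Hle; clear -Hle HL HL7; lia.
Qed.
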